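(* Let $a_2,a_3$ be integers with $1<a_2<a_3$, $A=\{1,a_2,a_3\}$, and let $SG(A,n,p)$ be a stride generator. Then no thread (with respect to $n$) of order $i\le p$ is covered by any other thread.
   Context: For integers $n$ and $i\ge 0$, an integer $x$ has an $n$-generation of order $i$ if there are integers $c_1,c_2\ge 0$ with $x+ia_3=c_2a_2+c_1$ and $c_1+c_2\le n+i$. For integers $n$ and $p\ge0$, $SG(A,n,p)$ is a stride generator if: (A) every integer $0\le x<a_3$ has an $n$-generation of some order $\le p$; (B) at least one integer $0\le x<a_3$ has no $n$-generation of order $<p$; (C) at least one integer $0\le y<a_3$ has no $(n-1)$-generation of any order $\le p+1$. Threads: for integers $e\ge 0$, $i\ge0$ with $n+i-e\ge 0$, the thread $T(e,i)$ is the integer interval $[c,d]$ with $c=ea_2-ia_3$, $d=c+(n+i)-e$, of order $i$. Only such intervals meeting $[0,a_3)$ are regarded as threads. A thread $[c_1,d_1]$ covers a thread $[c_2,d_2]$ if $c_1\le c_2$ and $d_1\ge d_2$. *)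

(* Defs.v *)
From Stdlib Require Import ZArith Lia.
Open Scope Z_scope.

Definition has_gen (a2 a3 n i x : Z) : Prop :=
  0 <= i /\
  exists c1 c2 : Z, 0 <= c1 /\ 0 <= c2 /\
    x + i * a3 = c2 * a2 + c1 /\ c1 + c2 <= n + i.

Definition stride_generator (a2 a3 n p : Z) : Prop :=
  0 <= p /\
  (forall x, 0 <= x < a3 -> exists i, 0 <= i <= p /\ has_gen a2 a3 n i x) /\
  (exists x, 0 <= x < a3 /\ forall i, 0 <= i < p -> ~ has_gen a2 a3 n i x) /\
  (exists y, 0 <= y < a3 /\ forall i, 0 <= i <= p + 1 -> ~ has_gen a2 a3 (n - 1) i y).

(* endpoints of the interval T(e,i) = [c, d] *)
Definition thread_c (a2 a3 e i : Z) : Z := e * a2 - i * a3.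
Definition thread_d (a2 a3 n e i : Z) : Z := thread_c a2 a3 e i + (n + i) - e.

Definition is_thread (a2 a3 n e i : Z) : Prop :=
  0 <= e /\ 0 <= i /\ 0 <= n + i - e /\
  exists x, thread_c a2 a3 e i <= x <= thread_d a2 a3 n e i /\ 0 <= x < a3.

Definition covers (a2 a3 n e1 i1 e2 i2 : Z) : Prop :=
  thread_c a2 a3 e1 i1 <= thread_c a2 a3 e2 i2 /\
  thread_d a2 a3 n e2 i2 <= thread_d a2 a3 n e1 i1.

(* Main.v *)
Require Import Defs.
From Stdlib Require Import ZArith Lia.
Open Scope Z_scope.

Theorem lemma6 (a2 a3 n p : Z) :
  1 < a2 < a3 ->
  stride_generator a2 a3 n p ->
  forall e i e' i' : Z,
    is_thread a2 a3 n e i -> i <= p ->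
    is_thread a2 a3 n e' i' -> (e', i') <> (e, i) ->
    ~ covers a2 a3 n e' i' e i.
Proof.
  intros Ha [Hp [HA [HB HC]]] e i e' i' Ht Hip Ht' Hne Hcov.
  destruct Ht as [He [Hi [Hl _]]].
  destruct Ht' as [He' [Hi' [Hl' _]]].
  unfold covers, thread_d, thread_c in Hcov. destruct Hcov as [H1 H2].
  set (u := i - i') in *. set (v := e - e') in *.
  assert (HD : 0 <= v * a2 - u * a3) by (unfold u, v; nia).
  assert (HE : 0 <= u * (a3 - 1) - v * (a2 - 1)) by (unfold u, v; nia).
  assert (Hv0 : 0 <= v * (a3 - a2)) by nia.
  assert (Hu0 : 0 <= u * (a3 - a2)) by nia.
  assert (Hv : 0 <= v) by nia.
  assert (Hu : 0 <= u) by nia.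
  assert (Hu1 : 1 <= u).
  { destruct (Z.eq_dec u 0) as [E0|E0]; [|lia].
    assert (v = 0) by (rewrite E0 in HD, HE; nia).
    exfalso; apply Hne; f_equal; unfold u, v in *; lia. }
  destruct HB as [x [Hx Hno]].
  destruct (HA x Hx) as [m [Hm Hg]].
  assert (Hmp : m = p).
  { destruct (Z.eq_dec m p); auto. exfalso. apply (Hno m); [lia|exact Hg]. }
  subst m.
  destruct Hg as [_ [c1 [c2 [Hc1 [Hc2 [Heq Hs]]]]]].
  apply (Hno (p - u)); [lia|].
  split; [lia|].
  destruct (Z_le_gt_dec v c2) as [Hcv|Hcv].
  - exists (c1 + (v * a2 - u * a3)), (c2 - v). repeat split; try lia; nia.
  - exists (x + (p - u) * a3), 0. repeat split; try lia.
    all: assert (0 <= (v - c2) * (a2 - 1)) by nia; nia.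
Qed.
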